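(* Let $(u_S,u_R)$ be an environment that is jointly-inclusive and satisfies partitional-unique-response and scant-indifferences. If commitment has no value, then the environment is felicitous.
   Context: $A=\{a_1,\dots,a_{|A|}\}$ and $\Omega$ are finite nonempty sets, $\mu_0$ a prior on $\Omega$ with $\mu_0(\omega)>0$ for all $\omega$, $M$ a finite message set with $|M|>\max\{|\Omega|,|A|\}$. An environment is a pair of functions $u_S,u_R:A\times\Omega\to[0,1]$. Messaging strategies $\sigma:\Omega\to\Delta M$, action strategies $\rho:M\to\Delta A$, $U_i(\sigma,\rho)=\sum_{\omega,m,a}\mu_0(\omega)\sigma(m|\omega)\rho(a|m)u_i(a,\omega)$. $(\sigma,\rho)$ is S-BR if $\sigma\in\arg\max_{\sigma'}U_S(\sigma',\rho)$ and R-BR if $\rho\in\arg\max_{\rho'}U_R(\sigma,\rho')$. The persuasion payoff is the maximum of $U_S$ over R-BR profiles; the cheap-talk payoff is the maximum over profiles that are S-BR and R-BR; commitment has no value if they are equal. Jointly-inclusive: for every $a\in A$ there is $\omega$ such that $u_S(a,\omega)>u_S(a',\omega)$ and $u_R(a,\omega)>u_R(a',\omega)$ for all $a'\neq a$. Partitional-unique-response: for every nonempty $\hat\Omega\subseteq\Omega$, $\arg\max_{a}\sum_{\omega\in\hat\Omega}\mu_0(\omega)u_R(a,\omega)$ is a singleton. Scant-indifferences: with $\mathbf u_S(a)=u_S(a,\cdot)\in\mathbb R^{|\Omega|}$, $\mathbf u_R(a)=u_R(a,\cdot)$, for each $i$ the expanded-indifference matrix $T^i$ has $|\Omega|$ columns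 and rows $\mathbf u_S(a_j)-\mathbf u_S(a_i)$ ($j\ne i$), $\mathbf u_R(a_j)-\mathbf u_R(a_i)$ ($j\ne i$), and the rows of the $|\Omega|\times|\Omega|$ identity; scant-indifferences holds if for each $i$ every matrix obtained from $T^i$ by deleting some rows has full rank. Felicitous: with $\Omega_i^{u_S}=\{\omega:a_i\in\arg\max_a u_S(a,\omega)\}$, for every $i$ with $\Omega_i^{u_S}\ne\emptyset$, $a_i\in\arg\max_a\sum_{\omega\in\Omega_i^{u_S}}\mu_0(\omega)u_R(a,\omega)$. *)

(* Defs.v *)
From HB Require Import structures.
From mathcomp Require Import all_boot all_order all_algebra.
From mathcomp Require Import reals.
Set Implicit Arguments. Unset Strict Implicit. Unset Printing Implicit Defensive.
Import Order.TTheory GRing.Theory Num.Theory.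
Local Open Scope ring_scope.

Section Game.
Variables (R : realType) (A W M : finType).
(* W plays the role of Omega (states). *)
Variable mu0 : W -> R.
Variables uS uR : A -> W -> R.

Definition is_dist (T : finType) (p : T -> R) : Prop :=
  (forall x, 0 <= p x) /\ \sum_x p x = 1.

Definition msg_strategy (sigma : W -> M -> R) : Prop :=
  forall w, is_dist (sigma w).
Definition act_strategy (rho : M -> A -> R) : Prop :=
  forall m, is_dist (rho m).

Definition payoff (u : A -> W -> R) (sigma : W -> M -> R) (rho : M -> A -> R) : R :=
  \sum_w \sum_m \sum_a mu0 w * sigma w m * rho m a * u a w.

Definition US := payoff uS.
Definition UR := payoff uR.

Definition S_BR sigma rho : Prop :=
  forall sigma', msg_strategy sigma' -> US sigma' rho <= US sigma rho.
Definition R_BR sigma rho : Prop :=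
  forall rho', act_strategy rho' -> UR sigma rho' <= UR sigma rho.

Definition is_max (S : R -> Prop) (v : R) : Prop :=
  S v /\ forall x, S x -> x <= v.

Definition persuasion_values (v : R) : Prop :=
  exists sigma rho, [/\ msg_strategy sigma, act_strategy rho,
    R_BR sigma rho & v = US sigma rho].
Definition cheap_talk_values (v : R) : Prop :=
  exists sigma rho, [/\ msg_strategy sigma, act_strategy rho,
    S_BR sigma rho, R_BR sigma rho & v = US sigma rho].

Definition commitment_no_value : Prop :=
  exists v, is_max persuasion_values v /\ is_max cheap_talk_values v.

Definition jointly_inclusive : Prop :=
  forall a, exists w, forall a', a' != a -> uS a' w < uS a w /\ uR a' w < uR a w.

Definition argmaxA (f : A -> R) : {set A} := [set a | [forall a', f a' <= f a]].

Definition exp_uR (B : {set W}) (a : A) : R := \sum_(w in B) mu0 w * uR a w.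

Definition partitional_unique_response : Prop :=
  forall B : {set W}, B != set0 -> #|argmaxA (exp_uR B)| = 1%N.

(* Rows of the expanded-indifference matrix T^i (for action ai):
   inl (inl aj) : uS(aj) - uS(ai), aj != ai;
   inl (inr aj) : uR(aj) - uR(ai), aj != ai;
   inr w        : the w-th row of the identity matrix. *)
Definition T_row (ai : A) (r : (A + A) + W) (w : W) : R :=
  match r with
  | inl (inl aj) => uS aj w - uS ai w
  | inl (inr aj) => uR aj w - uR ai w
  | inr w' => (w' == w)%:R
  end.

Definition T_valid_row (ai : A) (r : (A + A) + W) : bool :=
  match r with
  | inl (inl aj) => aj != ai
  | inl (inr aj) => aj != ai
  | inr _ => true
  end.

Definition T_sub (ai : A) (X : {set (A + A) + W}) : 'M[R]_(#|X|, #|[set: W]|) :=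
  \matrix_(k, j) T_row ai (enum_val k) (enum_val j).

Definition scant_indifferences : Prop :=
  forall (ai : A) (X : {set (A + A) + W}),
    {subset X <= T_valid_row ai} ->
    \rank (T_sub ai X) = minn #|X| #|[set: W]|.

Definition OmegaS (a : A) : {set W} := [set w | [forall a', uS a' w <= uS a w]].

Definition felicitous : Prop :=
  forall a, OmegaS a != set0 -> a \in argmaxA (exp_uR (OmegaS a)).

End Game.

(* Main.v *)
Require Import Defs.
From HB Require Import structures.
From mathcomp Require Import all_boot all_order all_algebra.
From mathcomp Require Import reals.
From mathcomp Require Import ring lra.
Import Order.TTheory GRing.Theory Num.Theory.
Local Open Scope ring_scope.
Set Implicit Arguments. Unset Strict Implicit. Unset Printing Implicit Defensive.

Section Aux.
Variable R : realType.

Lemma small_t (I : finType) (P : pred I) (al be : I -> R) :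
  (forall i, P i -> 0 < al i) ->
  exists2 t, 0 < t & forall t', 0 < t' <= t -> forall i, P i -> 0 <= al i + t' * be i.
Proof.
move=> hal.
exists (\big[Order.min/1]_(i | P i) (al i / (`|be i| + 1))).
  apply: lt_bigmin => // i Pi; apply: divr_gt0; first exact: hal.
  by rewrite ltr_pwDr // normr_ge0.
move=> t' /andP[t'0 t't] i Pi.
have hle : \big[Order.min/1]_(i | P i) (al i / (`|be i| + 1)) <= al i / (`|be i| + 1).
  by apply: (@bigmin_le_cond _ R I 1 i P (fun i => al i / (`|be i| + 1))). 
have := le_trans t't hle => {}hle.
have h1 : 0 < `|be i| + 1 by rewrite ltr_pwDr // normr_ge0.
have h2 : t' * `|be i| <= al i.
  rewrite ler_pdivlMr // in hle.
  apply: le_trans hle; rewrite mulrDr mulr1 lerDl; exact: ltW.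
have h3 : - (t' * `|be i|) <= t' * be i.
  rewrite -mulrN; apply: ler_wpM2l; [exact: ltW | exact: lerNnormlW].
rewrite -(subrr (t' * `|be i|)); apply: lerD => //.
Qed.

End Aux.

Lemma sum_delta (R : realType) (T : finType) (j : T) (F : T -> R) :
  \sum_i (i == j)%:R * F i = F j.
Proof.
rewrite (bigD1 j) //= eqxx mul1r big1 ?addr0 // => i /negbTE ->; by rewrite mul0r.
Qed.

Section Mx.
Variables (R : realType) (A W : finType) (uS uR : A -> W -> R).
Hypothesis hsc : scant_indifferences uS uR.

Lemma sum_enumW (F : W -> R) : \sum_w F w = \sum_(j < #|[set: W]|) F (enum_val j).
Proof.
rewrite -(big_enum_val F); apply: eq_bigl => w; by rewrite inE.
Qed.

Lemma kerL ai (X : {set (A + A) + W}) :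
  {subset X <= T_valid_row ai} ->
  forall v : W -> R, (exists w, v w != 0) ->
  (forall r, r \in X -> \sum_w T_row uS uR ai r w * v w = 0) ->
  (#|X| < #|W|)%N.
Proof.
move=> hv v [w0 hw0] hker.
rewrite ltnNge; apply/negP => hle.
have hr := hsc hv.
have cT : #|[set: W]| = #|W| by rewrite cardsT.
set T := T_sub uS uR ai X in hr.
have rf : row_free T^T.
  by rewrite /row_free mxrank_tr hr cT (minn_idPr hle).
pose vv : 'rV[R]_#|[set: W]| := \row_j v (enum_val j).
have h0 : vv *m T^T = 0 *m T^T.
  rewrite mul0mx; apply/rowP => k; rewrite !mxE.
  rewrite -[RHS](hker (enum_val k)); last exact: enum_valP.
  rewrite sum_enumW; apply: eq_bigr => j _; rewrite !mxE mulrC //.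
have := row_free_inj rf h0 => /rowP /(_ (enum_rank_in (in_setT w0) w0)).
rewrite !mxE enum_rankK_in ?in_setT // => h; by rewrite h eqxx in hw0.
Qed.

Lemma solveL ai (X : {set (A + A) + W}) :
  {subset X <= T_valid_row ai} -> (#|X| <= #|W|)%N ->
  forall tg : (A + A) + W -> R, exists d : W -> R,
  forall r, r \in X -> \sum_w T_row uS uR ai r w * d w = tg r.
Proof.
move=> hv hle tg.
have hr := hsc hv.
have cT : #|[set: W]| = #|W| by rewrite cardsT.
set T := T_sub uS uR ai X in hr.
have rf : row_full T^T.
  by rewrite /row_full mxrank_tr hr cT (minn_idPl hle).
pose tv : 'rV[R]_#|X| := \row_k tg (enum_val k).
have : (tv <= T^T)%MS by exact: submx_full.
case/submxP => D hD.
case: (boolP (0 < #|W|)%N) => [hW|]; last first.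
  rewrite -eqn0Ngt => /eqP cW0.
  exists (fun _ => 0) => r hr0.
  have := hle; rewrite cW0 leqn0 => /eqP /cards0_eq X0.
  by rewrite X0 inE in hr0.
have /card_gt0P [w0 _] := hW.
exists (fun w => D 0 (enum_rank_in (in_setT w0) w)) => r hr0.
have := congr1 (fun N : 'rV[R]_#|X| => N 0 (enum_rank_in hr0 r)) hD.
rewrite !mxE enum_rankK_in // => ->.
rewrite sum_enumW; apply: eq_bigr => j _.
by rewrite !mxE enum_rankK_in ?enum_valK_in // mulrC.
Qed.

Lemma uS_neq ai aj w : aj != ai -> uS aj w != uS ai w.
Proof.
move=> hne; apply/negP => /eqP heq.
pose X : {set (A + A) + W} := inl (inl aj) |: (inr @: [set~ w]).
have hv : {subset X <= T_valid_row ai}.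
  by move=> r /setU1P [->|/imsetP [w' _ ->]]; rewrite unfold_in.
have hW : (0 < #|W|)%N by apply/card_gt0P; exists w.
have hc : #|X| = #|W|.
  rewrite cardsU1 card_imset; last by move=> ? ? [].
  have hn : (inl (inl aj) : (A + A) + W) \notin inr @: [set~ w].
    by apply/negP => /imsetP [? _].
  rewrite (negbTE hn).
  by rewrite cardsC1 add1n prednK.
suff : (#|X| < #|W|)%N by rewrite hc ltnn.
apply: (kerL hv (v := fun w' => (w' == w)%:R)).
  by exists w; rewrite eqxx oner_eq0.
move=> r /setU1P [->|/imsetP [w' hw' ->]] /=.
  rewrite (eq_bigr (fun w' => (w' == w)%:R * (uS aj w' - uS ai w'))) ?sum_delta ?heq ?subrr //.
  by move=> w' _; rewrite mulrC.
rewrite (eq_bigr (fun w'' => (w'' == w')%:R * (w'' == w)%:R)) ?sum_delta.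
  by move: hw'; rewrite in_setC1 => /negbTE ->.
by move=> w'' _; rewrite eq_sym.
Qed.

End Mx.



Section G.
Variables (R : realType) (A W M : finType) (mu0 : W -> R) (uS uR : A -> W -> R).
Hypothesis hmu : forall w, 0 < mu0 w.

Definition xo (sigma : W -> M -> R) (rho : M -> A -> R) a w :=
  mu0 w * \sum_m sigma w m * rho m a.

Lemma payoff_xo (u : A -> W -> R) (sigma : W -> M -> R) (rho : M -> A -> R) :
  payoff mu0 u sigma rho = \sum_w \sum_a xo sigma rho a w * u a w.
Proof.
rewrite /payoff; apply: eq_bigr => w _.
rewrite exchange_big; apply: eq_bigr => a _.
rewrite /xo mulr_sumr mulr_suml; apply: eq_bigr => m _; by rewrite !mulrA.
Qed.

Lemma payoff_m (u : A -> W -> R) (sigma : W -> M -> R) (rho : M -> A -> R) :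
  payoff mu0 u sigma rho = \sum_m \sum_a rho m a * \sum_w mu0 w * sigma w m * u a w.
Proof.
rewrite /payoff exchange_big; apply: eq_bigr => m _.
rewrite exchange_big; apply: eq_bigr => a _.
rewrite mulr_sumr; apply: eq_bigr => w _; by rewrite mulrCA !mulrA.
Qed.

Lemma payoff_w (u : A -> W -> R) (sigma : W -> M -> R) (rho : M -> A -> R) :
  payoff mu0 u sigma rho = \sum_w \sum_m mu0 w * sigma w m * \sum_a rho m a * u a w.
Proof.
rewrite /payoff; apply: eq_bigr => w _; apply: eq_bigr => m _.
rewrite mulr_sumr; apply: eq_bigr => a _; by rewrite !mulrA.
Qed.

Definition obedient (x : A -> W -> R) :=
  [/\ forall a w, 0 <= x a w, forall w, \sum_a x a w = mu0 w &
      forall a b, 0 <= \sum_w x a w * (uR a w - uR b w)].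
Definition xval (x : A -> W -> R) := \sum_w \sum_a x a w * uS a w.

Section Build.
Variables (hle : (#|A| <= #|M|)%N) (a0 : A) (x : A -> W -> R).
Hypothesis hx : obedient x.

Definition iota (a : A) : M := enum_val (widen_ord hle (enum_rank a)).
Lemma iota_inj : injective iota.
Proof.
move=> a b /enum_val_inj /(congr1 val) /= /val_inj; exact: enum_rank_inj.
Qed.

Definition bsig w m := \sum_a (iota a == m)%:R * (x a w / mu0 w).
Definition brho m a : R := (iota a == m)%:R + (~~ [exists a', iota a' == m])%:R * (a == a0)%:R.

Lemma brho_iota a' a : brho (iota a') a = (a == a')%:R.
Proof.
rewrite /brho (inj_eq iota_inj).
have -> : [exists a'', iota a'' == iota a'] by apply/existsP; exists a'.
by rewrite /= mul0r addr0.
Qed.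

Lemma xo_b rho' a w : xo bsig rho' a w = \sum_a' x a' w * rho' (iota a') a.
Proof.
rewrite /xo /bsig.
under eq_bigr do rewrite mulr_suml.
rewrite exchange_big mulr_sumr; apply: eq_bigr => a' _.
rewrite (eq_bigr (fun m => (m == iota a')%:R * (x a' w / mu0 w * rho' m a))); last first.
  by move=> m _; rewrite eq_sym -mulrA.
rewrite sum_delta mulrA mulrCA divff ?mulr1 //; exact: lt0r_neq0.
Qed.

Lemma xo_bb a w : xo bsig brho a w = x a w.
Proof.
rewrite xo_b (eq_bigr (fun a' => (a' == a)%:R * x a' w)) ?sum_delta //.
by move=> a' _; rewrite brho_iota eq_sym mulrC.
Qed.

Lemma bsig_strat : msg_strategy bsig.
Proof.
case: hx => h0 h1 _.
move=> w; split.
  move=> m; apply: sumr_ge0 => a _; apply: mulr_ge0; first by rewrite ler0n.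
  by apply: divr_ge0 => //; exact: ltW.
rewrite /bsig exchange_big /=.
rewrite (eq_bigr (fun a => x a w / mu0 w)); last first.
  move=> a _; rewrite -mulr_suml (eq_bigr (fun m => (m == iota a)%:R * 1)).
    by rewrite sum_delta mul1r.
  by move=> m _; rewrite eq_sym mulr1.
by rewrite -mulr_suml h1 divff //; exact: lt0r_neq0.
Qed.

Lemma brho_strat : act_strategy brho.
Proof.
move=> m; split.
  move=> a; apply: addr_ge0; first by rewrite ler0n.
  by apply: mulr_ge0; rewrite ler0n.
case: (boolP [exists a', iota a' == m]) => [/existsP [a' /eqP <-]|hn].
  rewrite (eq_bigr (fun a => (a == a')%:R * 1)) ?sum_delta //.
  by move=> a _; rewrite brho_iota mulr1.
rewrite big_split /= big1; last first.
  move=> a _; case: eqP => // ha; exfalso; move/negP: hn; apply; apply/existsP; exists a; exact/eqP.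
rewrite add0r (eq_bigr (fun a => (a == a0)%:R * 1)) ?sum_delta //.
by move=> a _; rewrite hn mul1r mulr1.
Qed.

Lemma b_RBR : R_BR mu0 uR bsig brho.
Proof.
case: hx => h0 h1 h2.
move=> rho' hrho'.
have eR : UR mu0 uR bsig brho = \sum_a' \sum_w x a' w * uR a' w.
  rewrite /UR payoff_xo exchange_big; apply: eq_bigr => a _; apply: eq_bigr => w _.
  by rewrite xo_bb.
have eL : UR mu0 uR bsig rho' =
    \sum_a' \sum_a rho' (iota a') a * \sum_w x a' w * uR a w.
  rewrite /UR payoff_xo.
  under eq_bigr do under eq_bigr do rewrite xo_b mulr_suml.
  rewrite exchange_big /=; under eq_bigr do rewrite exchange_big /=.
  rewrite exchange_big /=; apply: eq_bigr => a' _; apply: eq_bigr => a _.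
  rewrite mulr_sumr; apply: eq_bigr => w _.
  by rewrite mulrCA !mulrA.
rewrite eL eR; apply: ler_sum => a' _.
have hs : \sum_i rho' (iota a') i = 1 by case: (hrho' (iota a')).
have hp : forall i, 0 <= rho' (iota a') i by case: (hrho' (iota a')).
apply: (@le_trans _ _ (\sum_i rho' (iota a') i * \sum_w x a' w * uR a' w)).
  apply: ler_sum => a _; apply: ler_wpM2l => //.
  rewrite -subr_ge0 -sumrB; apply: le_trans (h2 a' a) _.
  by rewrite le_eqVlt; apply/orP; left; apply/eqP; apply: eq_bigr => w _; rewrite mulrBr.
by rewrite -mulr_suml hs mul1r.
Qed.

Lemma b_US : US mu0 uS bsig brho = xval x.
Proof.
rewrite /US payoff_xo /xval; apply: eq_bigr => w _; apply: eq_bigr => a _.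
by rewrite xo_bb.
Qed.

Lemma obedient_pv : persuasion_values M mu0 uS uR (xval x).
Proof.
exists bsig, brho; split; [exact: bsig_strat | exact: brho_strat | exact: b_RBR | ].
by rewrite b_US.
Qed.

End Build.

Lemma perturbE (I J : finType) (f K : I -> J -> R) i0 j1 j2 (c : R) :
  \sum_i \sum_j (f i j + (i == i0)%:R * (c * ((j == j1)%:R - (j == j2)%:R))) * K i j
  = \sum_i \sum_j f i j * K i j + c * (K i0 j1 - K i0 j2).
Proof.
have -> : \sum_i \sum_j (f i j + (i == i0)%:R * (c * ((j == j1)%:R - (j == j2)%:R))) * K i j
  = \sum_i (\sum_j f i j * K i j + (i == i0)%:R * (c * (K i j1 - K i j2))).
  apply: eq_bigr => i _.
  under eq_bigr do rewrite mulrDl.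
  rewrite big_split /=; congr (_ + _).
  rewrite (eq_bigr (fun j => ((i == i0)%:R * c) * ((j == j1)%:R * K i j - (j == j2)%:R * K i j))).
    by rewrite -mulr_sumr sumrB !sum_delta mulrA.
  by move=> j _; rewrite -mulrBl !mulrA.
by rewrite big_split /= sum_delta.
Qed.

Lemma dist_perturb (J : finType) (p : J -> R) j1 j2 :
  is_dist p -> is_dist (fun j => p j + 1 * (p j2 * ((j == j1)%:R - (j == j2)%:R))).
Proof.
case=> h0 h1; split.
  move=> j; rewrite mul1r; case: (eqVneq j j2) => [->|hj].
    rewrite ?eqxx mulrBr mulr1 addrCA subrr addr0; apply: mulr_ge0 => //; by rewrite ler0n.
  rewrite ?(negbTE hj) subr0; apply: addr_ge0 => //; apply: mulr_ge0 => //; by rewrite ler0n.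
rewrite big_split /= h1 -mulr_sumr -mulr_sumr sumrB.
rewrite (eq_bigr (fun j => (j == j1)%:R * 1)) ?sum_delta; last by move=> j _; rewrite mulr1.
rewrite (eq_bigr (fun j => (j == j2)%:R * 1)) ?sum_delta; last by move=> j _; rewrite mulr1.
by rewrite subrr !mulr0 addr0.
Qed.

Lemma exists_pos (J : finType) (p : J -> R) : is_dist p -> exists j, 0 < p j.
Proof.
case=> h0 h1; case: (boolP [exists j, 0 < p j]) => [/existsP //|/existsPn hn].
have : \sum_j p j = 0.
  apply: big1 => j _; apply/eqP; rewrite eq_le h0 andbT; by rewrite leNgt hn.
by rewrite h1 => /eqP; rewrite oner_eq0.
Qed.

Section CT.
Variables (sigma : W -> M -> R) (rho : M -> A -> R).
Hypotheses (hsig : msg_strategy sigma) (hrho : act_strategy rho)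
  (hS : S_BR mu0 uS sigma rho) (hR : R_BR mu0 uR sigma rho).

Definition K m c := \sum_w mu0 w * sigma w m * uR c w.
Definition Ua m w := \sum_a rho m a * uS a w.

Lemma P1 m a b : 0 < rho m a -> K m b <= K m a.
Proof.
move=> hpos.
pose rho' m' a' := rho m' a' + (m' == m)%:R * (rho m a * ((a' == b)%:R - (a' == a)%:R)).
have hs : act_strategy rho'.
  move=> m'; rewrite /rho'; case: (eqVneq m' m) => [->|hm].
    exact: dist_perturb.
  case: (hrho m') => h0 h1; split => [a'|]; first by rewrite mul0r addr0.
  by under eq_bigr do rewrite mul0r addr0.
have := hR hs; rewrite /UR !payoff_m /rho' perturbE -/(K m b) -/(K m a).
rewrite gerDl (pmulr_rle0 _ hpos) subr_le0 => h; exact: h.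
Qed.

Lemma payoff_w2 (u : A -> W -> R) (sig : W -> M -> R) :
  payoff mu0 u sig rho = \sum_w \sum_m sig w m * (mu0 w * \sum_a rho m a * u a w).
Proof.
rewrite payoff_w; apply: eq_bigr => w _; apply: eq_bigr => m _; by rewrite mulrCA mulrA.
Qed.

Lemma P2 w m m' : 0 < sigma w m -> Ua m' w <= Ua m w.
Proof.
move=> hpos.
pose sig' w' m'' := sigma w' m'' + (w' == w)%:R * (sigma w m * ((m'' == m')%:R - (m'' == m)%:R)).
have hs : msg_strategy sig'.
  move=> w'; rewrite /sig'; case: (eqVneq w' w) => [->|hw].
    exact: dist_perturb.
  case: (hsig w') => h0 h1; split => [m''|]; first by rewrite mul0r addr0.
  by under eq_bigr do rewrite mul0r addr0.
have := hS hs; rewrite /US !payoff_w2 /sig' perturbE.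
rewrite gerDl (pmulr_rle0 _ hpos) subr_le0 (ler_pM2l (hmu w)) => h; exact: h.
Qed.

Lemma Oxo a b : \sum_w xo sigma rho a w * (uR a w - uR b w) = \sum_m rho m a * (K m a - K m b).
Proof.
rewrite /xo /K.
under eq_bigr do rewrite mulr_sumr mulr_suml.
rewrite exchange_big /=; apply: eq_bigr => m _.
rewrite -sumrB mulr_sumr; apply: eq_bigr => w _.
by rewrite -mulrBr; ring.
Qed.

Lemma Oterm_ge0 m a b : 0 <= rho m a * (K m a - K m b).
Proof.
have := (proj1 (hrho m)) a; rewrite le_eqVlt => /orP [/eqP <-|hp]; first by rewrite mul0r.
by apply: mulr_ge0; [exact: ltW | rewrite subr_ge0; exact: P1].
Qed.

Lemma Oxo_ge m a b : rho m a * (K m a - K m b) <= \sum_w xo sigma rho a w * (uR a w - uR b w).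
Proof.
rewrite Oxo (bigD1 m) //= lerDl; apply: sumr_ge0 => m' _; exact: Oterm_ge0.
Qed.

Lemma xo_ge m a w : mu0 w * sigma w m * rho m a <= xo sigma rho a w.
Proof.
rewrite /xo -mulrA; apply: ler_wpM2l; first exact: ltW.
rewrite (bigD1 m) //= lerDl; apply: sumr_ge0 => m' _; apply: mulr_ge0.
  by case: (hsig w) => h _; exact: h.
by case: (hrho m') => h _; exact: h.
Qed.

Lemma obed_xo : obedient (xo sigma rho).
Proof.
split.
- move=> a w; rewrite /xo; apply: mulr_ge0; first exact: ltW.
  apply: sumr_ge0 => m _; apply: mulr_ge0.
    by case: (hsig w) => h _; exact: h.
  by case: (hrho m) => h _; exact: h.
- move=> w; rewrite /xo -mulr_sumr exchange_big /=.
  rewrite (eq_bigr (fun m => sigma w m)); first by case: (hsig w) => _ ->; rewrite mulr1.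
  move=> m _; rewrite -mulr_sumr; by case: (hrho m) => _ ->; rewrite mulr1.
- move=> a b; rewrite Oxo; apply: sumr_ge0 => m _; exact: Oterm_ge0.
Qed.

Lemma xval_xo : xval (xo sigma rho) = US mu0 uS sigma rho.
Proof. by rewrite /US payoff_xo /xval. Qed.

Lemma sum_e (F : A -> R) c1 c2 :
  \sum_a ((a == c1)%:R - (a == c2)%:R) * F a = F c1 - F c2.
Proof.
under eq_bigr do rewrite mulrBl.
by rewrite sumrB !sum_delta.
Qed.

Lemma lin_sum (x g D : W -> R) (k : R) :
  \sum_w (x w + k * g w) * D w = \sum_w x w * D w + k * \sum_w g w * D w.
Proof.
under eq_bigr do rewrite mulrDl.
by rewrite big_split /= mulr_sumr; congr (_ + _); apply: eq_bigr => w _; rewrite mulrA.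
Qed.

Variables (hle : (#|A| <= #|M|)%N) (a0 : A).
Hypothesis hsc : scant_indifferences uS uR.
Hypothesis hmax : forall y, persuasion_values M mu0 uS uR y -> y <= US mu0 uS sigma rho.

Lemma better_contra (x : A -> W -> R) :
  obedient x -> xval (xo sigma rho) < xval x -> False.
Proof.
move=> hx hlt.
have := hmax (obedient_pv hle a0 hx); rewrite -xval_xo => hle2.
by move: (lt_le_trans hlt hle2); rewrite ltxx.
Qed.

Lemma P3 m w c1 c2 : 0 < sigma w m -> 0 < rho m c1 -> 0 < rho m c2 -> c1 = c2.
Proof.
move=> hw h1 h2; case: (eqVneq c1 c2) => // hne; exfalso.
pose q w' := mu0 w' * sigma w' m.
have q0 : forall w', 0 <= q w'.
  move=> w'; apply: mulr_ge0; first exact: ltW. by case: (hsig w') => h _; exact: h.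
have hKc : K m c2 = K m c1.
  by apply/eqP; rewrite eq_le !P1.
pose X0 : {set (A + A) + W} := [set r | match r with
   | inl (inl _) => false
   | inl (inr b) => (b != c1) && (K m b == K m c1)
   | inr w' => q w' == 0 end].
pose X := inl (inl c2) |: X0.
have hv : {subset X <= T_valid_row c1}.
  move=> r; rewrite !inE => /orP [/eqP -> /=|]; first by rewrite unfold_in /= eq_sym.
  by rewrite unfold_in; case: r => [[a|b]|w'] //= /andP [].
have hv0 : {subset X0 <= T_valid_row c1} by move=> r hr; apply: hv; apply/setU1P; right.
have hlt : (#|X0| < #|W|)%N.
  apply: (kerL hsc hv0 (v:=q)).
    exists w; apply: lt0r_neq0; apply: mulr_gt0 => //.
  move=> r; rewrite inE; case: r => [[a|b]|w'] //=.
    case/andP => _ /eqP hb.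
    rewrite (eq_bigr (fun w' => q w' * uR b w' - q w' * uR c1 w')).
      by rewrite sumrB; apply/eqP; rewrite subr_eq0; apply/eqP; exact: hb.
    by move=> w' _; rewrite mulrBl ![_ * q _]mulrC.
  move=> /eqP hq.
  rewrite (eq_bigr (fun w'' => (w'' == w')%:R * q w'')) ?sum_delta //.
  by move=> w'' _; rewrite eq_sym.
have hleX : (#|X| <= #|W|)%N.
  rewrite cardsU1; apply: leq_trans (leq_add (leq_b1 _) (leqnn _)) _; by rewrite add1n.
pose tg (r : (A + A) + W) : R := match r with
   | inl (inl _) => -1
   | inl (inr b) => if b == c2 then -1 else 0
   | inr _ => 0 end.
have [d hd] := solveL hsc hv hleX tg.
have d1 : forall w', q w' = 0 -> d w' = 0.
  move=> w' hq.
  have hr : inr w' \in X by apply/setU1P; right; rewrite inE /= hq.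
  have := hd _ hr; rewrite /= (eq_bigr (fun w'' => (w'' == w')%:R * d w'')) ?sum_delta //.
  by move=> w'' _; rewrite eq_sym.
have d2 : \sum_w' d w' * (uS c1 w' - uS c2 w') = 1.
  have := hd _ (setU11 _ _); rewrite /= => h.
  rewrite -[1]opprK -h -sumrN; apply: eq_bigr => w' _; ring.
have d3 : forall b, b != c1 -> K m b = K m c1 ->
    \sum_w' d w' * (uR c1 w' - uR b w') = if b == c2 then 1 else 0.
  move=> b hb1 hb2.
  have hr : inl (inr b) \in X by apply/setU1P; right; rewrite inE /= hb1 hb2 eqxx.
  have := hd _ hr; rewrite /= => h.
  have e : \sum_w' d w' * (uR c1 w' - uR b w') = - \sum_w' (uR b w' - uR c1 w') * d w'.
    rewrite -sumrN; apply: eq_bigr => w' _; ring.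
  rewrite e h; case: (b == c2); by rewrite ?oppr0 ?opprK.
pose xc := xo sigma rho.
have hx := obed_xo.
case: hx => hx0 hx1 hx2.
pose e a : R := (a == c1)%:R - (a == c2)%:R.
have ec1 : e c1 = 1 by rewrite /e eqxx (negbTE hne) subr0.
have ec2 : e c2 = -1 by rewrite /e eqxx eq_sym (negbTE hne) sub0r.
have eo : forall a, a != c1 -> a != c2 -> e a = 0.
  by move=> a ha1 ha2; rewrite /e (negbTE ha1) (negbTE ha2) subrr.
have qpos : forall w', q w' != 0 -> 0 < q w' by move=> w' hq; rewrite lt_def hq q0.
have xc_pos : forall c w', 0 < rho m c -> q w' != 0 -> 0 < xc c w'.
  move=> c w' hc hq; apply: lt_le_trans (xo_ge m c w'); apply: mulr_gt0 => //; exact: qpos.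
have [t1 t1p ht1] := @small_t _ _ (fun w' => q w' != 0) (fun w' => xc c1 w') d
  (fun w' hq => xc_pos c1 w' h1 hq).
have [t2 t2p ht2] := @small_t _ _ (fun w' => q w' != 0) (fun w' => xc c2 w') (fun w' => - d w')
  (fun w' hq => xc_pos c2 w' h2 hq).
have Opos : forall c b, 0 < rho m c -> K m c = K m c1 -> K m b != K m c1 ->
    0 < \sum_w' xc c w' * (uR c w' - uR b w').
  move=> c b hc hKc' hb; apply: lt_le_trans (Oxo_ge m c b); apply: mulr_gt0 => //.
  rewrite subr_gt0 lt_def hKc' eq_sym hb /= -hKc'; exact: P1.
have [t3 t3p ht3] := @small_t _ _ (fun b => K m b != K m c1)
  (fun b => \sum_w' xc c1 w' * (uR c1 w' - uR b w'))
  (fun b => \sum_w' d w' * (uR c1 w' - uR b w'))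
  (fun b hb => Opos c1 b h1 erefl hb).
have [t4 t4p ht4] := @small_t _ _ (fun b => K m b != K m c1)
  (fun b => \sum_w' xc c2 w' * (uR c2 w' - uR b w'))
  (fun b => - \sum_w' d w' * (uR c2 w' - uR b w'))
  (fun b hb => Opos c2 b h2 hKc hb).
pose t := Num.min t1 (Num.min t2 (Num.min t3 t4)).
have tp : 0 < t by rewrite !lt_min t1p t2p t3p t4p.
have tt1 : 0 < t <= t1 by rewrite tp /t !ge_min lexx ?orbT.
have tt2 : 0 < t <= t2 by rewrite tp /t !ge_min lexx ?orbT.
have tt3 : 0 < t <= t3 by rewrite tp /t !ge_min lexx ?orbT.
have tt4 : 0 < t <= t4 by rewrite tp /t !ge_min lexx ?orbT.
have sc2 : \sum_w' d w' * (uR c1 w' - uR c2 w') = 1.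
  by rewrite (d3 c2) ?eqxx // eq_sym.
have sle1 : forall b, K m b = K m c1 -> \sum_w' d w' * (uR c1 w' - uR b w') <= 1.
  move=> b hb; case: (eqVneq b c1) => [->|hb1].
    by rewrite big1 ?ler01 // => w' _; rewrite subrr mulr0.
  by rewrite (d3 b hb1 hb); case: (b == c2); rewrite ?lexx ?ler01.
have sge0 : forall b, K m b = K m c1 -> 0 <= \sum_w' d w' * (uR c1 w' - uR b w').
  move=> b hb; case: (eqVneq b c1) => [->|hb1].
    by rewrite big1 ?lexx // => w' _; rewrite subrr mulr0.
  by rewrite (d3 b hb1 hb); case: (b == c2); rewrite ?lexx ?ler01.
pose x' a w' := xc a w' + (t * e a) * d w'.
have hx' : obedient x'.
  split.
  - move=> a w'; case: (eqVneq (q w') 0) => hq.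
      by rewrite /x' (d1 _ hq) mulr0 addr0.
    case: (eqVneq a c1) => [->|ha1]; first by rewrite /x' ec1 mulr1; exact: ht1.
    case: (eqVneq a c2) => [->|ha2].
      by rewrite /x' ec2 mulrN1 mulNr -mulrN; exact: ht2.
    by rewrite /x' eo // mulr0 mul0r addr0.
  - move=> w'; rewrite /x' big_split /= hx1.
    rewrite (eq_bigr (fun a => ((a == c1)%:R - (a == c2)%:R) * (t * d w'))); last first.
      by move=> a _; rewrite /e; ring.
    rewrite -mulr_suml (eq_bigr (fun a => ((a == c1)%:R - (a == c2)%:R) * 1)); last by move=> a _; rewrite mulr1.
    by rewrite (sum_e (fun _ => 1)) subrr mul0r addr0.
  - move=> a b; rewrite /x' (lin_sum (xc a) d (fun w => uR a w - uR b w)).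
    case: (eqVneq a c1) => [->|ha1].
      rewrite ec1 mulr1.
      case: (eqVneq (K m b) (K m c1)) => hb.
        apply: addr_ge0; first exact: hx2.
        by apply: mulr_ge0; [exact: ltW | exact: sge0].
      exact: ht3.
    case: (eqVneq a c2) => [->|ha2].
      rewrite ec2 mulrN1.
      case: (eqVneq (K m b) (K m c1)) => hb.
        apply: addr_ge0; first exact: hx2.
        rewrite mulNr -mulrN; apply: mulr_ge0; first exact: ltW.
        have -> : \sum_w' d w' * (uR c2 w' - uR b w') =
          \sum_w' d w' * (uR c1 w' - uR b w') - \sum_w' d w' * (uR c1 w' - uR c2 w').
          by rewrite -sumrB; apply: eq_bigr => w' _; ring.
        by rewrite sc2 opprB subr_ge0; exact: sle1.
      by rewrite mulNr -mulrN; exact: ht4.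
    by rewrite eo // mulr0 mul0r addr0; exact: hx2.
have hval : xval x' = xval xc + t * \sum_w' d w' * (uS c1 w' - uS c2 w').
  rewrite /xval mulr_sumr -big_split; apply: eq_bigr => w' _.
  rewrite /x'; under eq_bigr do rewrite mulrDl.
  rewrite big_split /=; congr (_ + _).
  rewrite (eq_bigr (fun a => ((a == c1)%:R - (a == c2)%:R) * (t * d w' * uS a w'))); last first.
    by move=> a _; rewrite /e; ring.
  rewrite (sum_e (fun a => t * d w' * uS a w')); ring.
apply: (better_contra hx'); by rewrite hval d2 mulr1 ltrDl.
Qed.

Lemma pure m w c : 0 < sigma w m -> 0 < rho m c -> forall a, rho m a = (a == c)%:R.
Proof.
move=> hw hc.
have h0 : forall a, a != c -> rho m a = 0.
  move=> a hac; apply/eqP; rewrite eq_le; case: (hrho m) => hp _; rewrite hp andbT.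
  rewrite leNgt; apply/negP => ha; move/eqP: hac; apply; exact: (P3 hw ha hc).
move=> a; case: (eqVneq a c) => [->|hac]; last by rewrite h0.
case: (hrho m) => _ hs; rewrite -hs (bigD1 c) //= big1 ?addr0 // => a' /h0 //.
Qed.

Lemma Ua_pure m w c w' : 0 < sigma w m -> 0 < rho m c -> Ua m w' = uS c w'.
Proof.
move=> hw hc; rewrite /Ua (eq_bigr (fun a => (a == c)%:R * uS a w')) ?sum_delta //.
by move=> a _; rewrite (pure hw hc).
Qed.

Lemma act_exists w : exists c, exists m, 0 < sigma w m /\ 0 < rho m c.
Proof.
have [m hm] := exists_pos (hsig w); have [c hc] := exists_pos (hrho m).
by exists c, m.
Qed.

Lemma same_act w m1 m2 c1 c2 : 0 < sigma w m1 -> 0 < rho m1 c1 ->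
  0 < sigma w m2 -> 0 < rho m2 c2 -> c1 = c2.
Proof.
move=> s1 r1 s2 r2.
have e1 := P2 m2 s1; have e2 := P2 m1 s2.
rewrite (Ua_pure w s1 r1) (Ua_pure w s2 r2) in e1 e2.
case: (eqVneq c1 c2) => // hne; exfalso.
have := uS_neq hsc w hne; rewrite eq_le e1 e2 //.
Qed.

Lemma felicitous_main : jointly_inclusive uS uR -> partitional_unique_response mu0 uR ->
  felicitous mu0 uS uR.
Proof.
move=> hji hpur.
have [act hact] := fin_all_exists act_exists.
have xcE : forall a w, xo sigma rho a w = mu0 w * (a == act w)%:R.
  move=> a w; rewrite /xo; congr (_ * _).
  rewrite (eq_bigr (fun m => sigma w m * (a == act w)%:R)).
    by rewrite -mulr_suml; case: (hsig w) => _ ->; rewrite mul1r.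
  move=> m _; case: (hsig w) => hp _; have := hp m; rewrite le_eqVlt => /orP [/eqP <-|hs].
    by rewrite !mul0r.
  have [c hc] := exists_pos (hrho m).
  have [m' [hs' hr']] := hact w.
  have ec := same_act hs hc hs' hr'.
  by rewrite (pure hs hc) ec.
have Oexp : forall c b, \sum_w xo sigma rho c w * (uR c w - uR b w) =
    exp_uR mu0 uR [set w | act w == c] c - exp_uR mu0 uR [set w | act w == c] b.
  move=> c b; rewrite /exp_uR -sumrB [RHS]big_mkcond /=; apply: eq_bigr => w _.
  rewrite xcE inE eq_sym; case: (act w == c) => /=; by rewrite ?mulr1 ?mulr0 ?mul0r ?mulrBr.
case: obed_xo => hx0 hx1 hx2.
have actji : forall a w, (forall a', a' != a -> uS a' w < uS a w /\ uR a' w < uR a w) ->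
    act w = a.
  move=> a w hw; case: (eqVneq (act w) a) => // hca; exfalso.
  set c := act w in hca.
  set S := [set w' | act w' == c].
  have hS0 : S != set0 by apply/set0Pn; exists w; rewrite inE.
  have h1 := hpur S hS0.
  have cin : c \in argmaxA (exp_uR mu0 uR S).
    rewrite inE; apply/forallP => b; rewrite -subr_ge0 -Oexp; exact: hx2.
  have Opos : forall b, b != c -> 0 < \sum_w' xo sigma rho c w' * (uR c w' - uR b w').
    move=> b hb; rewrite Oexp subr_gt0 ltNge; apply/negP => hle'.
    have bin : b \in argmaxA (exp_uR mu0 uR S).
      rewrite inE; apply/forallP => a'; move: cin; rewrite inE => /forallP /(_ a') h.
      exact: le_trans h hle'.
    move: h1 => /eqP /cards1P [z hz].
    move: cin bin; rewrite hz !inE => /eqP hcz /eqP hbz.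
    by move/eqP: hb; apply; rewrite hbz hcz.
  have [t0 t0p ht0] := @small_t _ _ (fun b => b != c)
    (fun b => \sum_w' xo sigma rho c w' * (uR c w' - uR b w'))
    (fun b => - (uR c w - uR b w)) Opos.
  pose t := Num.min t0 (mu0 w).
  have tp : 0 < t by rewrite lt_min t0p hmu.
  have tt0 : 0 < t <= t0 by rewrite tp /t ge_min lexx.
  have ttm : t <= mu0 w by rewrite /t ge_min lexx orbT.
  pose e b : R := (b == a)%:R - (b == c)%:R.
  have ea : e a = 1 by rewrite /e eqxx eq_sym (negbTE hca) subr0.
  have ec : e c = -1 by rewrite /e eqxx (negbTE hca) sub0r.
  have eo : forall b, b != a -> b != c -> e b = 0.
    by move=> b h1' h2'; rewrite /e (negbTE h1') (negbTE h2') subrr.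
  pose x' b w' := xo sigma rho b w' + (t * e b) * (w' == w)%:R.
  have hx' : obedient x'.
    split.
    - move=> b w'; case: (eqVneq w' w) => [->|hw']; last by rewrite /x' (negbTE hw') mulr0 addr0.
      case: (eqVneq b a) => [->|hba].
        by rewrite /x' ?eqxx ea mulr1 mulr1; apply: addr_ge0 => //; exact: ltW.
      case: (eqVneq b c) => [->|hbc]; last by rewrite /x' ?eqxx eo // mulr0 mul0r addr0.
      rewrite /x' ?eqxx ec xcE eqxx mulr1 mulrN1 mulNr (_ : (true%:R : R) = 1) // mulr1 subr_ge0 //.
    - move=> w'; rewrite /x' big_split /= hx1 -mulr_suml.
      rewrite (eq_bigr (fun b => ((b == a)%:R - (b == c)%:R) * t)); last first.
        by move=> b _; rewrite /e mulrC.
      by rewrite (sum_e (fun _ => t)) subrr mul0r addr0.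
    - move=> b b'; rewrite /x' (lin_sum (xo sigma rho b) (fun w' => (w' == w)%:R)
        (fun w' => uR b w' - uR b' w')).
      rewrite sum_delta.
      case: (eqVneq b a) => [->|hba].
        rewrite ea mulr1; apply: addr_ge0; first exact: hx2.
        apply: mulr_ge0; first exact: ltW.
        case: (eqVneq b' a) => [->|hb'a]; first by rewrite subrr.
        by rewrite subr_ge0; apply: ltW; case: (hw b' hb'a).
      case: (eqVneq b c) => [->|hbc]; last by rewrite eo // mulr0 mul0r addr0; exact: hx2.
      rewrite ec mulrN1 mulNr -mulrN.
      case: (eqVneq b' c) => [->|hb'c]; first by rewrite subrr oppr0 mulr0 addr0; exact: hx2.
      exact: ht0.
  have hval : xval x' = xval (xo sigma rho) + t * (uS a w - uS c w).
    rewrite /xval.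
    have -> : t * (uS a w - uS c w) =
        \sum_w' \sum_b (t * e b) * (w' == w)%:R * uS b w'.
      rewrite exchange_big /=.
      rewrite (eq_bigr (fun b => (t * e b) * uS b w)); last first.
        move=> b _; rewrite (eq_bigr (fun w' => (w' == w)%:R * (t * e b * uS b w'))).
          by rewrite sum_delta.
        by move=> w' _; rewrite mulrCA mulrA.
      rewrite (eq_bigr (fun b => ((b == a)%:R - (b == c)%:R) * (t * uS b w))); last first.
        by move=> b _; rewrite /e; ring.
      rewrite (sum_e (fun b => t * uS b w)); ring.
    rewrite -big_split /=; apply: eq_bigr => w' _.
    rewrite -big_split /=; apply: eq_bigr => b _; by rewrite /x' mulrDl.
  apply: (better_contra hx'); rewrite hval ltrDl; apply: mulr_gt0 => //.
  rewrite subr_gt0; case: (hw c _) => //; by rewrite eq_sym.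
have actmax : forall w a, uS a w <= uS (act w) w.
  move=> w a; have [wa hwa] := hji a.
  have ea := actji a wa hwa.
  have [m [hs hr]] := hact w.
  have [m' [hs' hr']] := hact wa.
  rewrite ea in hr'.
  have := P2 m' hs; by rewrite (Ua_pure w hs' hr') (Ua_pure w hs hr).
have OmE : forall a, OmegaS uS a = [set w | act w == a].
  move=> a; apply/setP => w; rewrite !inE; apply/forallP/eqP.
    move=> h; have := h (act w); have := actmax w a => h1 h2.
    case: (eqVneq (act w) a) => // hne; exfalso.
    by have := uS_neq hsc w hne; rewrite eq_le h1 h2.
  by move=> <- a'; exact: actmax.
move=> a _; rewrite inE; apply/forallP => b; rewrite OmE -subr_ge0 -Oexp; exact: hx2.
Qed.

End CT.
End G.


Theorem lemma8 (R : realType) (A W M : finType)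
  (hA : (0 < #|A|)%N) (hW : (0 < #|W|)%N)
  (hM : (maxn #|W| #|A| < #|M|)%N)
  (mu0 : W -> R) (hmu0 : is_dist mu0) (hmu0pos : forall w, 0 < mu0 w)
  (uS uR : A -> W -> R)
  (huS : forall a w, 0 <= uS a w <= 1) (huR : forall a w, 0 <= uR a w <= 1) :
  jointly_inclusive uS uR ->
  partitional_unique_response mu0 uR ->
  scant_indifferences uS uR ->
  commitment_no_value M mu0 uS uR ->
  felicitous mu0 uS uR.
Proof.
move=> hji hpur hsc [v [[_ hpmax] [[sigma [rho [hs hr hS hR hv]]] _]]].
have hle : (#|A| <= #|M|)%N.
  apply: ltnW; apply: leq_ltn_trans hM; exact: leq_maxr.
have /card_gt0P [a0 _] := hA.
apply: (felicitous_main hmu0pos hs hr hS hR hle a0 hsc _ hji hpur).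
by move=> y hy; rewrite -hv; exact: hpmax.
Qed.
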